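(* Fix the signal accuracy $\phi\in(\tfrac12,1]$, a type distribution $F$ satisfying the assumptions below, and designer preferences $(A_1,A_0,B_1,B_0)\in\mathbb{R}_+^4$. Then, as the reward $r\to\infty$, the designer can attain an expected payoff arbitrarily close to $\max\{A_1,A_0,B_1,B_0\}$: for every $\varepsilon>0$ there exists $R$ such that for every $r>R$ there is a classifier $\delta\in[0,1]^2$ with $EU_D(\delta\mid r)\ge \max\{A_1,A_0,B_1,B_0\}-\varepsilon$.
   Context: A unit mass of individuals $i\in[0,1]$ each privately knows a cost $\gamma_i\in\mathbb{R}$ of choosing behavior $\beta_i=1$ (compliance) rather than $\beta_i=0$. Costs are distributed in the population according to a continuously differentiable CDF $F$ whose density $f$ is log-concave with full support on $\mathbb{R}$. A designer chooses a classifier $\delta=(\delta_1,\delta_0)\in[0,1]^2$. Each individual's behavior generates a signal $s_i\in\{0,1\}$ with $\Pr[s_i=\beta_i]=\phi$, and the classifier assigns a decision $d_i\in\{0,1\}$ with $\Pr[d_i=s_i\mid s_i]=\delta_{s_i}$. An individual with $d_i=1$ receives reward $r\in\mathbb{R}$ and incurs cost $\gamma_i$ if $\beta_i=1$. Let $\rho(\delta,\phi)=(\delta_1+\delta_0-1)(2\phi-1)$. Given $(\delta,r)$, individual $i$ chooses $\beta_i=1$ iff $\gamma_i\le r\rho(\delta,\phi)$, so the prevalence of compliance is $\pi=\pi_F(\delta,\phi,r)=F(r\rho(\delta,\phi))$. The designer receives $A_1$ from a complier with $d_i=1$, $A_0$ from a complier with $d_i=0$, $B_1$ from a non-complier with $d_i=0$,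 and $B_0$ from a non-complier with $d_i=1$; the designer's expected payoff is $EU_D(\delta\mid r)=\pi\big[\phi(A_1\delta_1+A_0(1-\delta_1))+(1-\phi)(A_0\delta_0+A_1(1-\delta_0))\big]+(1-\pi)\big[\phi(B_1\delta_0+B_0(1-\delta_0))+(1-\phi)(B_0\delta_1+B_1(1-\delta_1))\big]$. *)

(* Defs.v *)
From Stdlib Require Import Reals Lra.
From Coquelicot Require Import Coquelicot.
Open Scope R_scope.

Definition rho (d1 d0 phi : R) : R := (d1 + d0 - 1) * (2 * phi - 1).

Definition prevalence (F : R -> R) (d1 d0 phi r : R) : R := F (r * rho d1 d0 phi).

Definition EU_D (F : R -> R) (phi A1 A0 B1 B0 r d1 d0 : R) : R :=
  let p := prevalence F d1 d0 phi r in
  p * (phi * (A1 * d1 + A0 * (1 - d1)) + (1 - phi) * (A0 * d0 + A1 * (1 - d0)))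
  + (1 - p) * (phi * (B1 * d0 + B0 * (1 - d0)) + (1 - phi) * (B0 * d1 + B1 * (1 - d1))).

(* f is log-concave: ln f is concave (f is positive everywhere here) *)
Definition log_concave (f : R -> R) : Prop :=
  forall x y t, 0 <= t <= 1 ->
    t * ln (f x) + (1 - t) * ln (f y) <= ln (f (t * x + (1 - t) * y)).

Definition admissible_cdf (F f : R -> R) : Prop :=
  (forall x, is_derive F x (f x)) /\
  (forall x, continuous f x) /\
  (forall x, 0 < f x) /\
  log_concave f /\
  is_lim F m_infty 0 /\
  is_lim F p_infty 1.

(* Main.v *)
Require Import Defs.
From Stdlib Require Import Reals Lra.
From Coquelicot Require Import Coquelicot.
Open Scope R_scope.

Lemma conv_le (t a b M : R) : 0 <= t <= 1 -> 0 <= a <= M -> 0 <= b <= M ->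
  0 <= t * a + (1 - t) * b <= M.
Proof. intros. split; nra. Qed.

Lemma key (p X Y M eta dl eps : R) : 0 <= X <= M -> 0 <= Y <= M ->
  (1 - eta) * M <= X -> Rabs (p - 1) < dl -> (eta + dl) * M <= eps ->
  p * X + (1 - p) * Y >= M - eps.
Proof.
  intros HX HY HXl Hp He. apply Rabs_def2 in Hp.
  destruct (Rle_dec X Y).
  - destruct (Rle_dec p 1); nra.
  - destruct (Rle_dec p 1); nra.
Qed.

Lemma key0 (p X Y M eta dl eps : R) : 0 <= X <= M -> 0 <= Y <= M ->
  (1 - eta) * M <= Y -> Rabs p < dl -> (eta + dl) * M <= eps ->
  p * X + (1 - p) * Y >= M - eps.
Proof.
  intros HX HY HXl Hp He. apply Rabs_def2 in Hp.
  destruct (Rle_dec X Y).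
  - destruct (Rle_dec p 0); nra.
  - destruct (Rle_dec p 0); nra.
Qed.

Theorem proposition1 (phi : R) (F f : R -> R) (A1 A0 B1 B0 : R) :
  1 / 2 < phi <= 1 ->
  admissible_cdf F f ->
  0 <= A1 -> 0 <= A0 -> 0 <= B1 -> 0 <= B0 ->
  forall eps : R, 0 < eps ->
  exists Rb : R, forall r : R, Rb < r ->
    exists d1 d0 : R, 0 <= d1 <= 1 /\ 0 <= d0 <= 1 /\
      EU_D F phi A1 A0 B1 B0 r d1 d0 >= Rmax (Rmax A1 A0) (Rmax B1 B0) - eps.
Proof.
  intros Hphi [_ [_ [_ [_ [Hm Hp]]]]] HA1 HA0 HB1 HB0 eps Heps.
  apply is_lim_spec in Hm. apply is_lim_spec in Hp.
  set (M := Rmax (Rmax A1 A0) (Rmax B1 B0)).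
  assert (MA1 : A1 <= M) by (unfold M; repeat (apply Rmax_Rle; auto with real || left)).
  assert (MA0 : A0 <= M).
  { unfold M; eapply Rle_trans; [apply Rmax_r|apply Rmax_l]. }
  assert (MB1 : B1 <= M).
  { unfold M; eapply Rle_trans; [apply Rmax_l|apply Rmax_r]. }
  assert (MB0 : B0 <= M).
  { unfold M; eapply Rle_trans; [apply Rmax_r|apply Rmax_r]. }
  assert (M0 : 0 <= M) by lra.
  set (eta := eps / (2 * M + 2 + eps)).
  assert (Hden : 0 < 2 * M + 2 + eps) by lra.
  assert (Heta0 : 0 < eta) by (unfold eta; apply Rdiv_lt_0_compat; lra).
  assert (Heta1 : eta < 1).
  { unfold eta. apply Rmult_lt_reg_r with (2 * M + 2 + eps); auto.
    unfold Rdiv. rewrite Rmult_assoc, Rinv_l by lra. lra. }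
  assert (HetaM : (eta + eta) * M <= eps).
  { unfold eta. apply Rmult_le_reg_r with (2 * M + 2 + eps); auto.
    unfold Rdiv. replace ((eps * / (2 * M + 2 + eps) + eps * / (2 * M + 2 + eps)) * M *
      (2 * M + 2 + eps)) with (2 * eps * M * (/ (2 * M + 2 + eps) * (2 * M + 2 + eps))) by ring.
    rewrite Rinv_l by lra. nra. }
  assert (Hc : 0 < 2 * phi - 1) by lra.
  set (c := eta * (2 * phi - 1)).
  assert (Hc0 : 0 < c) by (unfold c; nra).
  assert (Hphi' : 0 <= phi <= 1) by lra.
  assert (Hphi'' : 0 <= 1 - phi <= 1) by lra.
  destruct (Hp (mkposreal eta Heta0)) as [N1 HN1].
  destruct (Hm (mkposreal eta Heta0)) as [N0 HN0].
  assert (HX : forall d1 d0, 0 <= d1 <= 1 -> 0 <= d0 <= 1 ->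
     0 <= phi * (A1 * d1 + A0 * (1 - d1)) + (1 - phi) * (A0 * d0 + A1 * (1 - d0)) <= M).
  { intros d1 d0 H1 H0.
    replace (1 - phi) with (1 - phi) by ring.
    apply conv_le; auto.
    - replace (A1 * d1 + A0 * (1 - d1)) with (d1 * A1 + (1 - d1) * A0) by ring.
      apply conv_le; auto; lra.
    - replace (A0 * d0 + A1 * (1 - d0)) with (d0 * A0 + (1 - d0) * A1) by ring.
      apply conv_le; auto; lra. }
  assert (HY : forall d1 d0, 0 <= d1 <= 1 -> 0 <= d0 <= 1 ->
     0 <= phi * (B1 * d0 + B0 * (1 - d0)) + (1 - phi) * (B0 * d1 + B1 * (1 - d1)) <= M).
  { intros d1 d0 H1 H0.
    apply conv_le; auto.
    - replace (B1 * d0 + B0 * (1 - d0)) with (d0 * B1 + (1 - d0) * B0) by ring.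
      apply conv_le; auto; lra.
    - replace (B0 * d1 + B1 * (1 - d1)) with (d1 * B0 + (1 - d1) * B1) by ring.
      apply conv_le; auto; lra. }
  assert (Hcase : M = A1 \/ M = A0 \/ M = B1 \/ M = B0).
  { unfold M. unfold Rmax.
    destruct (Rle_dec A1 A0), (Rle_dec B1 B0), (Rle_dec _ _); tauto. }
  assert (Hpos : forall r, Rmax (N1 / c) 0 < r -> N1 < r * c).
  { intros r Hr. assert (N1 / c < r) by (eapply Rle_lt_trans; [apply Rmax_l|exact Hr]).
    apply Rmult_lt_compat_r with (r := c) in H; auto.
    unfold Rdiv in H. rewrite Rmult_assoc, Rinv_l in H by lra. lra. }
  assert (Hneg : forall r, Rmax (- N0 / c) 0 < r -> r * (- c) < N0).
  { intros r Hr. assert (- N0 / c < r) by (eapply Rle_lt_trans; [apply Rmax_l|exact Hr]).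
    apply Rmult_lt_compat_r with (r := c) in H; auto.
    unfold Rdiv in H. rewrite Rmult_assoc, Rinv_l in H by lra. lra. }
  destruct Hcase as [E|[E|[E|E]]].
  - exists (Rmax (N1 / c) 0). intros r Hr. exists 1, eta.
    split; [lra|]. split; [lra|].
    unfold EU_D, prevalence.
    assert (Hrho : rho 1 eta phi = c) by (unfold rho, c; ring).
    rewrite Hrho.
    apply key with (eta := eta) (dl := eta); auto; try (apply HX || apply HY); try lra.
    + rewrite E. assert (0 <= phi * eta) by nra. assert (0 <= (1-phi)*eta) by nra. nra.
  - exists (Rmax (N1 / c) 0). intros r Hr. exists eta, 1.
    split; [lra|]. split; [lra|].
    unfold EU_D, prevalence.
    assert (Hrho : rho eta 1 phi = c) by (unfold rho, c; ring).
    rewrite Hrho.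
    apply key with (eta := eta) (dl := eta); auto; try (apply HX || apply HY); try lra.
    + rewrite E. assert (0 <= phi * eta) by nra. assert (0 <= (1-phi)*eta) by nra. nra.
  - exists (Rmax (- N0 / c) 0). intros r Hr. exists 0, (1 - eta).
    split; [lra|]. split; [lra|].
    unfold EU_D, prevalence.
    assert (Hrho : rho 0 (1 - eta) phi = - c) by (unfold rho, c; ring).
    rewrite Hrho.
    apply key0 with (eta := eta) (dl := eta); auto; try (apply HX || apply HY); try lra.
    + rewrite E. assert (0 <= phi * eta) by nra. assert (0 <= (1-phi)*eta) by nra. nra.
    + replace (F (r * - c)) with (F (r * - c) - 0) by ring. 
      exact (HN0 _ (Hneg r Hr)).
  - exists (Rmax (- N0 / c) 0). intros r Hr. exists (1 - eta), 0.
    split; [lra|]. split; [lra|].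
    unfold EU_D, prevalence.
    assert (Hrho : rho (1 - eta) 0 phi = - c) by (unfold rho, c; ring).
    rewrite Hrho.
    apply key0 with (eta := eta) (dl := eta); auto; try (apply HX || apply HY); try lra.
    + rewrite E. assert (0 <= phi * eta) by nra. assert (0 <= (1-phi)*eta) by nra. nra.
    + specialize (HN0 (r * - c) (Hneg r Hr)).
      rewrite Rminus_0_r in HN0; exact HN0.
Qed.
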